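(* For every integer $n>0$, the rook equivalence graph $G(B)$ of the Ferrers board $B=(0,1,2,\ldots,n-1,n-1)$ (with $n+1$ columns of heights $0,1,\ldots,n-1$ followed by $n-1$) is isomorphic to the complete graph $K_n$.
   Context: A Ferrers board is given by a weakly increasing sequence of non-negative integers $B=(b_1,\ldots,b_n)$ of column heights; it is the set of unit cells in the first quadrant lying in column $i$ and rows $1,\ldots,b_i$. Prepending columns of height $0$ on the left does not change the board, and boards are compared using the same number of columns by such padding. A placement of $k$ rooks on $B$ is a set of $k$ cells of $B$ no two in the same row or column; $r_k(B)$ is the number of such placements. Two boards are rook equivalent if they have equal $r_k$ for all $k\ge 0$. The rook equivalence graph $G(B)$ has as vertices all Ferrers boards rook equivalent to $B$, and $\{B_1,B_2\}$ is an edge iff, written with the same number of columns, $B_1$ and $B_2$ differ in exactly two columns $i$ and $j$, where $B_1$ has $k$ more cells than $B_2$ in column $i$ and $k$ fewer cells than $B_2$ in column $j$, for some $k>0$. *)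

(* Defs.v *)
From mathcomp Require Import all_boot.
Set Implicit Arguments. Unset Strict Implicit. Unset Printing Implicit Defensive.

Definition ferrers (b : seq nat) : bool := sorted leq b.

(* Boards are considered up to prepending zero-height columns; we represent
   each board canonically by the (unique) padding-free representative:
   a weakly increasing sequence of positive heights. *)
Definition normalized (b : seq nat) : bool := ferrers b && all (fun x => 0 < x) b.

(* Cells of b: column i (0-based) and row j (0-based, i.e. row j+1) with j < b_i. *)
Definition cells (b : seq nat) : {set 'I_(size b) * 'I_(foldr maxn 0 b)} :=
  [set c : 'I_(size b) * 'I_(foldr maxn 0 b) | (c.2 : nat) < nth 0 b c.1].

Definition nonattacking (m h : nat) (S : {set 'I_m * 'I_h}) : bool :=
  [forall c1 in S, forall c2 in S,
     (c1 != c2) ==> ((c1.1 != c2.1) && (c1.2 != c2.2))].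

Definition rook_number (b : seq nat) (k : nat) : nat :=
  #|[set S in powerset (cells b) | nonattacking S && (#|S| == k)]|.

Definition rook_equiv (b1 b2 : seq nat) : Prop :=
  forall k, rook_number b1 k = rook_number b2 k.

Definition pad (m : nat) (b : seq nat) : seq nat := nseq (m - size b) 0 ++ b.

Definition rook_adj (b1 b2 : seq nat) : Prop :=
  exists m, [/\ size b1 <= m, size b2 <= m &
    exists i j k, [/\ i < m, j < m, i != j & 0 < k] /\
      nth 0 (pad m b1) i = nth 0 (pad m b2) i + k /\
      nth 0 (pad m b2) j = nth 0 (pad m b1) j + k /\
      (forall l, l < m -> l != i -> l != j ->
        nth 0 (pad m b1) l = nth 0 (pad m b2) l)].

Definition staircase_board (n : nat) : seq nat := iota 0 n ++ [:: n.-1].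

(* Main.v *)
Require Import Defs.
From mathcomp Require Import all_boot all_algebra ring zify.
Set Implicit Arguments. Unset Strict Implicit. Unset Printing Implicit Defensive.


Definition cellsG m h (b : seq nat) : {set 'I_m * 'I_h} :=
  [set c : 'I_m * 'I_h | (c.2 : nat) < nth 0 b c.1].
Definition famG m h (b : seq nat) (k : nat) : {set {set 'I_m * 'I_h}} :=
  [set S : {set 'I_m * 'I_h} | [&& S \subset cellsG m h b, nonattacking S & #|S| == k]].

Lemma rook_numberE b k : rook_number b k = #|famG (size b) (foldr maxn 0 b) b k|.
Proof.
rewrite /rook_number; apply: eq_card => S.
by rewrite !inE.
Qed.

Lemma nonattackingP m h (S : {set 'I_m * 'I_h}) :
  reflect (forall c1 c2, c1 \in S -> c2 \in S -> c1 != c2 ->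
             (c1.1 != c2.1) /\ (c1.2 != c2.2)) (nonattacking S).
Proof.
apply: (iffP forall_inP) => H.
- move=> c1 c2 h1 h2 ne; move/forall_inP: (H c1 h1) => /(_ c2 h2) /implyP.
  by move/(_ ne)/andP.
- move=> c1 h1; apply/forall_inP => c2 h2; apply/implyP => ne.
  by have [-> ->] := H c1 c2 h1 h2 ne.
Qed.

Lemma famG_widen m h m' h' b k (Hm : m <= m') (Hh : h <= h') :
  size b <= m -> foldr maxn 0 b <= h -> #|famG m h b k| = #|famG m' h' b k|.
Proof.
move=> sb mb.
pose f (c : 'I_m * 'I_h) : 'I_m' * 'I_h' := (widen_ord Hm c.1, widen_ord Hh c.2).
have winj n1 n2 (H : n1 <= n2) : injective (widen_ord H).
  by move=> x y /(congr1 val) /= /val_inj.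
have finj : injective f.
  by move=> [x1 y1] [x2 y2] [] /val_inj -> /val_inj ->.
have nthb i : nth 0 b i <= foldr maxn 0 b.
  elim: b {sb mb} i => [|a s IH] [|i] //=; first exact: leq_maxl.
  exact: leq_trans (IH i) (leq_maxr _ _).
have cellsf c : (f c \in cellsG m' h' b) = (c \in cellsG m h b) by rewrite !inE.
rewrite -(card_imset _ (imset_inj finj)); apply: eq_card => S'; symmetry.
apply/idP/imsetP.
- rewrite inE => /and3P [sub na cS].
  have inS' c' : c' \in S' -> exists c, c' = f c.
    move=> /(subsetP sub); rewrite inE => lt.
    have l2 : c'.2 < h.
      by apply: leq_trans lt (leq_trans (nthb _) mb).
    have l1 : c'.1 < m.
      apply: leq_trans sb; rewrite ltnNge; apply/negP => ge.
      by move: lt; rewrite nth_default.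
    by exists (Ordinal l1, Ordinal l2); move: l1 l2; case: c' {lt} => [x y] l1 l2;
      congr pair; apply/val_inj.
  exists (f @^-1: S').
    rewrite inE; apply/and3P; split.
    - by apply/subsetP => c; rewrite inE => /(subsetP sub); rewrite cellsf.
    - apply/nonattackingP => c1 c2; rewrite !inE => h1 h2 ne.
      have ne' : f c1 != f c2 by apply: contra ne => /eqP /finj ->.
      have [] := (nonattackingP _ na) _ _ h1 h2 ne'.
      by rewrite /f /= => a1 a2; split; [apply: contra a1 => /eqP -> | apply: contra a2 => /eqP ->].
    - rewrite -(eqP cS) -(card_imset (f @^-1: S') finj); apply/eqP.
      apply: eq_card => c'; apply/imsetP/idP => [[c]|].
        by rewrite inE => ? ->.
      by move=> cin; have [c ec] := inS' c' cin; exists c; rewrite // inE -ec.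
  apply/setP => c'; apply/idP/imsetP => [cin|[c]].
    by have [c ec] := inS' c' cin; exists c; rewrite // inE -ec.
  by rewrite inE => ? ->.
- move=> [S]; rewrite inE => /and3P [sub na cS] ->.
  rewrite inE; apply/and3P; split.
  - by apply/subsetP => c' /imsetP [c cin ->]; rewrite cellsf (subsetP sub).
  - apply/nonattackingP => c1' c2' /imsetP [c1 h1 ->] /imsetP [c2 h2 ->] ne.
    have ne' : c1 != c2 by apply: contra ne => /eqP ->.
    have [a1 a2] := (nonattackingP _ na) _ _ h1 h2 ne'.
    by split; rewrite /f /=; [apply: contra a1 | apply: contra a2] => /eqP /(congr1 val) /= /val_inj ->.
  - by rewrite card_imset.
Qed.


Lemma card_ltc h c : c <= h -> #|[set r : 'I_h | r < c]| = c.
Proof.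
move=> ch.
have winj : injective (widen_ord ch) by move=> x y /(congr1 val) /= /val_inj.
rewrite -[RHS](card_ord c) -(card_imset _ winj); apply: eq_card => r.
rewrite inE; apply/idP/imsetP => [rc|[x _ ->]] /=; last exact: ltn_ord.
by exists (Ordinal rc) => //; apply/val_inj.
Qed.

Section Rec.
Variables (m h : nat) (b : seq nat) (c : nat).
Hypothesis Hp : size b < m.
Hypothesis Hc : c <= h.
Hypothesis Hbc : forall i, nth 0 b i <= c.
Let p := size b.
Let P : 'I_m := Ordinal Hp.
Let b' := rcons b c.

Lemma nthb' i : nth 0 b' i = if i < p then nth 0 b i else if i == p then c else 0.
Proof. by rewrite /b' nth_rcons. Qed.

Lemma cellsb_col x : x \in cellsG m h b -> x.1 != P.
Proof.
rewrite inE => lt; apply/eqP => e; move: lt; rewrite e /= nth_default //.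
Qed.

Lemma cellsbb' x : x \in cellsG m h b -> x \in cellsG m h b'.
Proof.
move=> xc; have := cellsb_col xc; move: xc; rewrite !inE nthb' => lt ne.
case: ifP => // /negbT; rewrite -leqNgt => le.
by move: lt; rewrite nth_default.
Qed.

Lemma cellsb'b x : x \in cellsG m h b' -> x.1 != P -> x \in cellsG m h b.
Proof.
rewrite !inE nthb' => lt ne; case: ifP lt => // _.
have : (x.1 : nat) != p by apply: contra ne => /eqP e; apply/eqP/val_inj.
by move/negbTE => ->.
Qed.

Lemma rows_card (S : {set 'I_m * 'I_h}) : nonattacking S ->
  #|[set x.2 | x in S]| = #|S|.
Proof.
move=> na; apply: card_in_imset => x y xS yS e.
apply/eqP; apply/negPn/negP => ne.
by have [_] := (nonattackingP _ na) _ _ xS yS ne; rewrite e eqxx.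
Qed.

Lemma rows_sub (S : {set 'I_m * 'I_h}) : S \subset cellsG m h b ->
  [set x.2 | x in S] \subset [set r : 'I_h | r < c].
Proof.
move=> sub; apply/subsetP => r /imsetP [x /(subsetP sub)]; rewrite !inE => lt ->.
exact: leq_trans lt (Hbc _).
Qed.

Lemma famG_le k : #|famG m h b k| != 0 -> k <= c.
Proof.
rewrite -lt0n => /card_gt0P [S]; rewrite inE => /and3P [sub na /eqP <-].
by rewrite -rows_card // -(card_ltc Hc); apply: subset_leq_card; apply: rows_sub.
Qed.

Lemma subna (S T : {set 'I_m * 'I_h}) : S \subset T -> nonattacking T -> nonattacking S.
Proof.
move=> sub na; apply/nonattackingP => x y xS yS.
exact: (nonattackingP _ na) _ _ (subsetP sub _ xS) (subsetP sub _ yS).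
Qed.

Definition colp (S : {set 'I_m * 'I_h}) := [exists x in S, x.1 == P].
Definition gS (S : {set 'I_m * 'I_h}) := [set x in S | x.1 != P].

Lemma famG_rec k :
  #|famG m h b' k.+1| = #|famG m h b k.+1| + (c - k) * #|famG m h b k|.
Proof.
set A := famG m h b' k.+1.
rewrite -(cardsID [set S | colp S] A) addnC; congr (_ + _).
  apply: eq_card => S; rewrite !inE /colp.
  apply/andP/and3P => [[ncol /and3P [sub na cS]]|[sub na cS]]; split => //.
  - apply/subsetP => x xS; apply: cellsb'b; first exact: subsetP sub _ xS.
    by apply: contra ncol => e; apply/existsP; exists x; rewrite xS.
  - apply/negP => /existsP [x /andP [xS e]].
    by move: (cellsb_col (subsetP sub _ xS)); rewrite e.
  - apply/and3P; split => //; apply/subsetP => x xS.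
    exact: cellsbb' (subsetP sub _ xS).
set A1 := A :&: _.
pose R (S' : {set 'I_m * 'I_h}) := [set r : 'I_h | (r < c) && (r \notin [set x.2 | x in S'])].
have h1 S : S \in A1 -> (gS S \in famG m h b k) /\
    exists2 r, r \in R (gS S) & S = (P, r) |: gS S.
  rewrite !inE /colp => /andP [/and3P [sub na /eqP cS] /existsP [x /andP [xS /eqP xP]]].
  have eS : S = x |: gS S.
    apply/setP => y; rewrite !inE; case: (eqVneq y x) => [->|ne] /=; first exact: xS.
    case: (boolP (y \in S)) => //= yS; symmetry; apply/negP => /eqP yP.
    by have [] := (nonattackingP _ na) _ _ yS xS ne; rewrite xP yP eqxx.
  have xg : x \notin gS S by rewrite inE xP eqxx andbF.
  have subg : gS S \subset S by apply/subsetP => y; rewrite inE => /andP [].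
  split.
    apply/and3P; split.
    - apply/subsetP => y; rewrite inE => /andP [yS yP].
      exact: cellsb'b (subsetP sub _ yS) yP.
    - exact: subna subg na.
    - by move: cS; rewrite {1}eS cardsU1 xg add1n => -[->].
  exists x.2.
    rewrite inE; apply/andP; split.
      by move: (subsetP sub _ xS); rewrite inE xP nthb' ltnn eqxx.
    apply/imsetP => -[y]; rewrite inE => /andP [yS yP] e.
    have ne : y != x by apply: contra yP => /eqP ->; rewrite xP.
    by have [] := (nonattackingP _ na) _ _ yS xS ne; rewrite e eqxx.
  by rewrite {1}eS; congr (_ |: _); case: x xP {xS eS xg} => /= ? ? ->.
have h2 S' r : S' \in famG m h b k -> r \in R S' ->
    (P, r) |: S' \in A1 /\ gS ((P, r) |: S') = S'.
  rewrite !inE => /and3P [sub na /eqP cS] /andP [rc rn].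
  have Pn : (P, r) \notin S' by apply/negP => /(subsetP sub) /cellsb_col; rewrite /= eqxx.
  split.
    apply/andP; split; last first.
      by rewrite /colp; apply/existsP; exists (P, r); rewrite setU11 eqxx.
    apply/and3P; split.
    - apply/subsetP => y /setU1P [->|yS].
        by rewrite inE nthb' ltnn eqxx.
      exact: cellsbb' (subsetP sub _ yS).
    - apply/nonattackingP => y1 y2.
      have key y : y \in S' -> (y.1 != P) /\ (y.2 != r).
        move=> yS; split; first exact: cellsb_col (subsetP sub _ yS).
        by apply: contra rn => /eqP <-; apply/imsetP; exists y.
      move=> /setU1P [->|y1S] /setU1P [->|y2S] ne; rewrite ?eqxx // in ne.
      + by have [a1 a2] := key _ y2S; split; rewrite eq_sym.
      + exact: key.
      + exact: (nonattackingP _ na).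
    - by rewrite cardsU1 Pn cS.
  apply/setP => y; rewrite !inE; case: (eqVneq y (P, r)) => [->|ne] /=.
    by rewrite eqxx /= (negbTE Pn).
  case: (boolP (y \in S')) => //= yS.
  by rewrite (cellsb_col (subsetP sub _ yS)).
rewrite -sum1_card (partition_big gS (fun S' => S' \in famG m h b k)); last first.
  by move=> S /h1 [].
rewrite mulnC -sum_nat_const; apply: eq_bigr => S' S'in.
rewrite sum1dep_card.
have -> : #|[set S | (S \in A1) && (gS S == S')]| =
          #|[set (P, r) |: S' | r in R S']|.
  apply: eq_card => S; rewrite inE; apply/andP/imsetP.
    move=> [/h1 [_ [r rR eS]] /eqP gSe]; exists r; first by rewrite -gSe.
    by rewrite eS gSe.
  by move=> [r rR ->]; have [] := h2 _ _ S'in rR => -> ->.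
move: S'in; rewrite inE => /and3P [sub na /eqP cS].
rewrite card_in_imset; last first.
  move=> r1 r2 _ _ e; have : (P, r1) \in (P, r2) |: S' by rewrite -e setU11.
  case/setU1P => [[]//|/(subsetP sub) /cellsb_col]; by rewrite /= eqxx.
have -> : R S' = [set r : 'I_h | r < c] :\: [set x.2 | x in S'].
  by apply/setP => r; rewrite !inE andbC.
by rewrite cardsDS ?rows_sub // card_ltc // rows_card // cS.
Qed.
End Rec.


Lemma foldr_maxn_init z s : foldr maxn z s = maxn z (foldr maxn 0 s).
Proof. by elim: s => [|a s IH] /=; rewrite ?maxn0 // IH maxnCA. Qed.

Lemma mx_rcons s c : foldr maxn 0 (rcons s c) = maxn c (foldr maxn 0 s).
Proof. by rewrite foldr_rcons foldr_maxn_init maxn0. Qed.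

Lemma rook0 b : rook_number b 0 = 1.
Proof.
rewrite rook_numberE -(cards1 (set0 : {set 'I_(size b) * 'I_(foldr maxn 0 b)})).
apply: eq_card => S; rewrite !inE cards_eq0.
case: (eqVneq S set0) => [->|ne]; last by rewrite !andbF.
rewrite sub0set /= andbT; apply/forall_inP => x; by rewrite inE.
Qed.

Lemma rook_big b k : size b < k -> rook_number b k = 0.
Proof.
move=> lt; rewrite rook_numberE; apply: eq_card0 => S; rewrite inE.
apply/negP => /and3P [_ na /eqP cS].
have : #|[set x.1 | x in S]| <= size b.
  by rewrite -[X in _ <= X]card_ord; apply: max_card.
rewrite card_in_imset ?cS; first by rewrite leqNgt lt.
move=> x y xS yS e; apply/eqP; apply/negPn/negP => ne.
by have [] := (nonattackingP _ na) _ _ xS yS ne; rewrite e eqxx.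
Qed.

Lemma sorted_rcons_le b c i : sorted leq (rcons b c) -> nth 0 b i <= c.
Proof.
move=> so; case: (ltnP i (size b)) => [lt|ge]; last by rewrite nth_default.
have := sorted_leq_nth leq_trans leqnn 0 so.
move=> /(_ i (size b)); rewrite !inE size_rcons !nth_rcons lt ltnn eqxx.
by apply => //; [apply: ltnW | apply: ltnW].
Qed.

Lemma rook_rec b c k : sorted leq (rcons b c) ->
  rook_number (rcons b c) k.+1 = rook_number b k.+1 + (c - k) * rook_number b k
  /\ (rook_number b k != 0 -> k <= c).
Proof.
move=> so; have Hbc i := sorted_rcons_le i so.
set m := size (rcons b c); set H := foldr maxn 0 (rcons b c).
have Hp : size b < m by rewrite /m size_rcons.
have Hc : c <= H by rewrite /H mx_rcons leq_maxl.
have Hbm : foldr maxn 0 b <= H by rewrite /H mx_rcons leq_maxr.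
rewrite !rook_numberE -/m -/H.
rewrite !(famG_widen k.+1 (ltnW Hp) Hbm (leqnn _) (leqnn _)).
rewrite !(famG_widen k (ltnW Hp) Hbm (leqnn _) (leqnn _)).
split; first exact: (famG_rec Hp Hc Hbc).
move=> nz; exact: (@famG_le m H b c Hc Hbc k nz).
Qed.

Section S4.
Import GRing.Theory Num.Theory.
Local Open Scope ring_scope.

Definition ff (x : int) (j : nat) : int := \prod_(i < j) (x - (i : nat)%:Z).
Definition Fb (b : seq nat) (y : int) : int :=
  \prod_(i < size b) (y + (nth 0%N b i)%:Z - (i : nat)%:Z).
Definition rz b k : int := (rook_number b k)%:Z.

Lemma ff0 x : ff x 0 = 1.
Proof. by rewrite /ff big_ord0. Qed.

Lemma ffS x j : ff x j.+1 = ff x j * (x - j%:Z).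
Proof. by rewrite /ff big_ord_recr. Qed.

Lemma ffD x a c : ff x (a + c) = ff x a * ff (x - a%:Z) c.
Proof.
rewrite /ff big_split_ord /=; congr (_ * _); apply: eq_bigr => i _ /=.
by rewrite PoszD opprD addrA.
Qed.

Lemma Fb_rcons b c y : Fb (rcons b c) y = Fb b y * (y + c%:Z - (size b)%:Z).
Proof.
rewrite /Fb size_rcons big_ord_recr /= nth_rcons ltnn eqxx; congr (_ * _).
by apply: eq_bigr => i _; rewrite nth_rcons ltn_ord.
Qed.

Lemma rz0 b : rz b 0 = 1.
Proof. by rewrite /rz rook0. Qed.

Lemma rz_rec b c k : sorted leq (rcons b c) ->
  rz (rcons b c) k.+1 = rz b k.+1 + (c%:Z - k%:Z) * rz b k.
Proof.
move=> so; have [e le] := rook_rec k so.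
rewrite /rz e PoszD PoszM; congr (_ + _).
case: (eqVneq (rook_number b k) 0%N) => [->|nz]; first by rewrite !mulr0.
by rewrite subzn // le.
Qed.

Lemma F_identity b x : sorted leq b ->
  \sum_(k < (size b).+1) rz b k * ff x (size b - k) = Fb b x.
Proof.
elim/last_ind: b => [|b c IH] so.
  by rewrite /= big_ord_recl big_ord0 rz0 ff0 /Fb big_ord0 !mulr1 addr0.
have sob : sorted leq b by apply: subseq_sorted so; [exact: leq_trans | exact: subseq_rcons].
rewrite Fb_rcons -(IH sob) size_rcons.
set L := size b.
rewrite big_ord_recl /= subn0 rz0 mul1r.
have eA : \sum_(i < L.+1) rz (rcons b c) (bump 0 i) * ff x (L.+1 - bump 0 i) =
    \sum_(k < L.+1) rz b k.+1 * ff x (L - k) +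
    \sum_(k < L.+1) ((c%:Z - (k : nat)%:Z) * rz b k) * ff x (L - k).
  rewrite -big_split; apply: eq_bigr => k _.
  by rewrite /bump /= add1n subSS (rz_rec _ so) mulrDl.
have eB : (\sum_(k < L.+1) rz b k * ff x (L - k)) * (x + c%:Z - L%:Z) =
    \sum_(k < L.+1) rz b k * ff x (L - k).+1 +
    \sum_(k < L.+1) ((c%:Z - (k : nat)%:Z) * rz b k) * ff x (L - k).
  rewrite mulr_suml -big_split; apply: eq_bigr => k _ /=.
  have kL : (k <= L)%N by rewrite -ltnS.
  rewrite ffS -(subzn kL); ring.
rewrite eA eB addrA; congr (_ + _).
rewrite [in RHS]big_ord_recl [in LHS]big_ord_recr /= rz0 mul1r subn0.
have -> : rz b L.+1 = 0 by rewrite /rz rook_big.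
rewrite mul0r addr0; congr (_ + _).
apply: eq_bigr => k _; rewrite /bump /= add1n; congr (_ * ff x _).
by rewrite subnS prednK // subn_gt0.
Qed.

Lemma F_K b x K : sorted leq b -> (size b <= K)%N ->
  \sum_(k < K.+1) rz b k * ff x (K - k) =
  ff x (K - size b) * Fb b (x - (K - size b)%:Z).
Proof.
move=> so LK; set L := size b.
rewrite -(F_identity _ so) mulr_sumr -/L.
rewrite [RHS](big_ord_widen K.+1 (fun k => ff x (K - L) * (rz b k * ff (x - (K - L)%:Z) (L - k)))) //.
rewrite [RHS]big_mkcond /=; apply: eq_bigr => k _.
case: ifP => [kL|/negbT]; last first.
  by rewrite -leqNgt => lt; rewrite /rz rook_big // mul0r.
have -> : (K - k = (K - L) + (L - k))%N.
  by move: kL LK; rewrite ltnS => kL LK; rewrite addnBA // subnK.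
by rewrite ffD mulrCA.
Qed.

End S4.

Section S5.
Import GRing.Theory Num.Theory.

Definition u n q := [seq (if i == q then i else i.+1) | i <- iota 0 n].
Definition w n q := if q == 0 then iota 2 n.-1 else u n q.

Lemma size_u n q : size (u n q) = n.
Proof. by rewrite /u size_map size_iota. Qed.

Lemma nth_u n q i : i < n -> nth 0 (u n q) i = if i == q then i else i.+1.
Proof. by move=> lt; rewrite /u (nth_map 0) ?size_iota // nth_iota. Qed.

Lemma size_w n q : size (w n q) = if q == 0 then n.-1 else n.
Proof. by rewrite /w; case: eqP; rewrite ?size_iota ?size_u. Qed.

Lemma nth_pad_w n q i : 0 < n -> i < n ->
  nth 0 (pad n (w n q)) i = if i == q then i else i.+1.
Proof.
move=> n0 lt; rewrite /pad size_w /w; case: (eqVneq q 0) => [->|qn].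
  rewrite /= nth_cat size_nseq.
  have -> : n - n.-1 = 1 by lia.
  case: i lt => [|i] lt //=; rewrite nth_iota //; lia.
by rewrite subnn /= nth_u.
Qed.

Lemma normalized_w n q : q < n -> normalized (w n q).
Proof.
move=> qn; rewrite /normalized /ferrers /w; case: eqP => [_|/eqP q0].
  apply/andP; split; first exact: iota_sorted.
  by apply/allP => x; rewrite mem_iota => /andP [+ _]; lia.
apply/andP; split.
  apply/(sortedP 0) => i; rewrite size_u => lt.
  rewrite !nth_u //; try lia.
  by case: eqP; case: eqP => //; lia.
apply/allP => x /mapP [i _ ->]; case: eqP => //; lia.
Qed.

Lemma w_inj n q1 q2 : q1 < n -> q2 < n -> w n q1 = w n q2 -> q1 = q2.
Proof.
move=> l1 l2 e.
have s := congr1 size e; rewrite !size_w in s.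
case: (eqVneq q1 0) s e => [->|n1]; case: (eqVneq q2 0) => [->|n2] //; try lia.
move=> _; rewrite /w (negbTE n1) (negbTE n2) => e.
have := congr1 (fun s => nth 0 s q1) e; rewrite /= !nth_u // eqxx.
by case: eqP => // _; lia.
Qed.

Local Open Scope ring_scope.

Lemma exp2_inj (a b : nat) : (2:int) ^+ a = 2 ^+ b -> a = b.
Proof.
have e n : (2:int) ^+ n = Posz (2 ^ n)%N by rewrite -natz natrX.
by rewrite !e => -[] /eqP; rewrite eqn_exp2l // => /eqP.
Qed.

Lemma ff_zero (t j : nat) : (t < j)%N -> ff t%:Z j = 0.
Proof.
move=> tj; rewrite /ff (bigD1 (Ordinal tj)) //= subrr mul0r //.
Qed.

Lemma ff_nz (t : nat) : ff t%:Z t != 0.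
Proof.
apply/prodf_neq0 => i _; rewrite subr_eq0; apply/eqP => -[] e.
by have := ltn_ord i; rewrite -e ltnn.
Qed.

Lemma uniq_coef (d : nat -> int) K :
  (forall t : nat, \sum_(k < K.+1) d k * ff t%:Z (K - k) = 0) ->
  forall k, (k <= K)%N -> d k = 0.
Proof.
move=> H.
suff S t : forall s, (s <= t)%N -> (s <= K)%N -> d (K - s)%N = 0.
  by move=> k kK; have := S K (K - k)%N (leq_subr _ _) (leq_subr _ _); rewrite subKn.
elim: t => [|t IH] s st sK.
- move: st; rewrite leqn0 => /eqP ->; rewrite subn0.
  have := H 0%N; rewrite (bigD1 (@Ordinal K.+1 K (ltnSn _))) //= subnn ff0 mulr1.
  rewrite big1 ?addr0 // => k kne; rewrite ff_zero ?mulr0 // subn_gt0.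
  by have := ltn_ord k; move: kne => /eqP kne; rewrite ltnS leq_eqVlt => /orP [/eqP e|//]; case: kne; apply: val_inj.
- case: (ltnP s t.+1) => [lt|ge]; first exact: IH.
  have est : s = t.+1 by apply/eqP; rewrite eqn_leq st ge.
  subst s.
  have kK : (K - t.+1 < K.+1)%N by rewrite ltnS leq_subr.
  have := H t.+1; rewrite (bigD1 (Ordinal kK)) //= subKn //.
  rewrite big1 ?addr0; first by move/eqP; rewrite mulf_eq0 (negbTE (ff_nz _)) orbF => /eqP.
  move=> k kne; have kv : (k : nat) != (K - t.+1)%N by apply: contra kne => /eqP e; apply/eqP/val_inj.
  case: (ltnP (K - t.+1)%N k) => [lt|le].
    have -> : d k = d (K - (K - k))%N by rewrite subKn // -ltnS.
    by rewrite IH ?mul0r //; lia.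
  rewrite ff_zero ?mulr0 //; lia.
Qed.

Lemma FbB n y : (0 < n)%N -> Fb (staircase_board n) y = y ^+ n * (y - 1).
Proof.
move=> n0; rewrite /staircase_board cats1 Fb_rcons size_iota; congr (_ * _).
  rewrite /Fb size_iota -[n in y ^+ n]card_ord -prodr_const.
  by apply: eq_bigr => i _; rewrite nth_iota // add0n addrK.
have -> : (n.-1)%:Z = n%:Z - 1 by lia.
by ring.
Qed.

Lemma Fw n q x : (0 < n)%N -> (q < n)%N ->
  ff x (n.+1 - size (w n q)) * Fb (w n q) (x - (n.+1 - size (w n q))%:Z)
  = x ^+ n * (x - 1).
Proof.
move=> n0; case: q => [|q] qn; rewrite size_w /Fb size_w /w /=.
  have -> : (n.+1 - n.-1 = 2)%N by lia.
  rewrite /ff !big_ord_recr big_ord0 /=.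
  rewrite (eq_bigr (fun _ => x)); last first.
    by move=> i _; rewrite nth_iota // PoszD; ring.
  rewrite prodr_const card_ord -[in RHS](prednK n0) exprS; ring.
have -> : (n.+1 - n = 1)%N by lia.
rewrite /ff big_ord_recr big_ord0 /=.
rewrite (bigD1 (Ordinal qn)) //= nth_u // eqxx.
rewrite (eq_bigr (fun _ => x)); last first.
  move=> i /eqP ine; rewrite nth_u //.
  have -> : ((i : nat) == q.+1) = false by apply/eqP => e; apply: ine; apply: val_inj.
  by rewrite -addn1 PoszD; ring.
rewrite prodr_const cardC1 card_ord -[in RHS](prednK n0) exprS /=; ring.
Qed.

Lemma size_B n : size (staircase_board n) = n.+1.
Proof. by rewrite /staircase_board size_cat size_iota addn1. Qed.

Lemma sorted_B n : sorted leq (staircase_board n).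
Proof.
apply/(sortedP 0%N) => i; rewrite size_B /staircase_board cats1 !nth_rcons size_iota => lt.
case: ltnP => [l1|g1]; case: ltnP => [l2|g2]; rewrite ?nth_iota //; try lia.
by case: eqP => e; lia.
Qed.

Lemma prod_two L (c : 'I_L -> int) : (forall i, c i = 0 \/ c i = 1) ->
  \prod_(i < L) (2 - c i) = 2 ^+ #|[set i | c i == 0]|.
Proof.
move=> H; rewrite (bigID (fun i => c i == 0)) /=.
rewrite (eq_bigr (fun _ => 2)); last by move=> i /eqP ->; rewrite subr0.
rewrite [X in _ * X](eq_bigr (fun _ => 1)); last first.
  by move=> i; case: (H i) => ->; rewrite ?eqxx.
by rewrite prodr_const big1_eq mulr1 cardsE.
Qed.

Lemma backward n q : (0 < n)%N -> (q < n)%N -> rook_equiv (w n q) (staircase_board n).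
Proof.
move=> n0 qn.
have sw : sorted leq (w n q) by have /andP [] := normalized_w qn.
have szw : (size (w n q) <= n.+1)%N by rewrite size_w; case: eqP => _; lia.
have Hw (t : nat) : \sum_(k < n.+2) rz (w n q) k * ff t%:Z (n.+1 - k) = t%:Z ^+ n * (t%:Z - 1).
  by rewrite F_K // Fw.
have HB (t : nat) : \sum_(k < n.+2) rz (staircase_board n) k * ff t%:Z (n.+1 - k) = t%:Z ^+ n * (t%:Z - 1).
  by rewrite F_K ?sorted_B ?size_B // subnn ff0 mul1r subr0 FbB.
move=> k; case: (leqP k n.+1) => [kK|kK]; last first.
  by rewrite !rook_big ?size_B //; lia.
have Hd (t : nat) : \sum_(k < n.+2) (rz (w n q) k - rz (staircase_board n) k) * ff t%:Z (n.+1 - k) = 0.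
  under eq_bigr => i _ do rewrite mulrBl.
  by rewrite sumrB Hw HB subrr.
have := @uniq_coef (fun k => rz (w n q) k - rz (staircase_board n) k) n.+1 Hd k kK.
by move=> /eqP; rewrite subr_eq0 => /eqP [].
Qed.

Lemma Fb_zero b : (0 < size b)%N -> Fb b (- (nth 0%N b 0)%:Z) = 0.
Proof.
move=> s0; rewrite /Fb (bigD1 (Ordinal s0)) //= subr0 addNr mul0r //.
Qed.

Lemma ff_neg (b0 j : nat) : (0 < b0)%N -> ff (- b0%:Z) j != 0.
Proof. move=> b0p; apply/prodf_neq0 => i _; apply/eqP; lia. Qed.

Lemma forward n b : (0 < n)%N -> normalized b -> rook_equiv b (staircase_board n) ->
  exists2 q, (q < n)%N & b = w n q.
Proof.
move=> n0 /andP [sb pb] req.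
have hpos i : (i < size b)%N -> (0 < nth 0%N b i)%N.
  by move=> lt; apply: (allP pb); apply: mem_nth.
have E x : ff x (maxn (size b) n.+1 - size b) * Fb b (x - (maxn (size b) n.+1 - size b)%:Z) =
           ff x (maxn (size b) n.+1 - n.+1) * Fb (staircase_board n) (x - (maxn (size b) n.+1 - n.+1)%:Z).
  have h1 := @F_K b x (maxn (size b) n.+1) sb (leq_maxl _ _).
  have h2 := @F_K (staircase_board n) x (maxn (size b) n.+1) (sorted_B n).
  rewrite size_B in h2; rewrite -h1 -h2 ?leq_maxr //.
  by apply: eq_bigr => k _; rewrite /rz req.
case: (ltnP n.+1 (size b)) => [ML|LM].
  have KL : maxn (size b) n.+1 = size b by apply/maxn_idPl; apply: ltnW.
  have := E (- (nth 0%N b 0)%:Z); rewrite KL subnn ff0 subr0 Fb_zero ?mulr0 ?mul1r; last lia.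
  rewrite FbB // => /esym /eqP; rewrite !mulf_eq0 !expf_eq0 (negbTE (ff_neg _ _)) ?hpos //=; last lia.
  move=> /orP [/andP [_ /eqP]|/eqP]; have := hpos 0%N; lia.
have KM : maxn (size b) n.+1 = n.+1 by apply/maxn_idPr.
rewrite KM subnn in E.
have E' x : ff x (n.+1 - size b) * Fb b (x - (n.+1 - size b)%:Z) = x ^+ n * (x - 1).
  by rewrite E ff0 mul1r subr0 FbB.
have [j0|jpos] := eqVneq (n.+1 - size b)%N 0%N.
  have := E' (- (nth 0%N b 0)%:Z); rewrite j0 ff0 subr0 Fb_zero ?mul1r; last lia.
  move=> /esym /eqP; rewrite mulf_eq0 expf_eq0 => /orP [/andP [_ /eqP]|/eqP]; have := hpos 0%N; lia.
case: (ltnP 2 (n.+1 - size b)) => [j3|j2].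
  have := E' 2; rewrite (ff_zero (t := 2)) // mul0r => /esym /eqP.
  by rewrite mulf_eq0 expf_eq0 /= andbF.
pose c (i : 'I_(size b)) : int := (i : nat)%:Z + (n.+1 - size b)%:Z - (nth 0%N b i)%:Z.
have E'' x : ff x (n.+1 - size b) * \prod_(i < size b) (x - c i) = x ^+ n * (x - 1).
  rewrite -E'; congr (_ * _); apply: eq_bigr => i _; rewrite /c; ring.
have h01 i : c i = 0 \/ c i = 1.
  case: (eqVneq (c i) 0) => [|c0]; first by left.
  case: (eqVneq (c i) 1) => [|c1]; first by right.
  have := E'' (c i); rewrite (bigD1 i) //= subrr mul0r mulr0 => /esym /eqP.
  by rewrite mulf_eq0 expf_eq0 (negbTE c0) andbF /= subr_eq0 (negbTE c1).
have := E'' 2; rewrite prod_two //.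
have hj : (n.+1 - size b = 1 \/ n.+1 - size b = 2)%N by lia.
set Z := [set i | c i == 0].
have cC : #|~: Z| = (size b - #|Z|)%N by have := cardsC Z; rewrite card_ord; lia.
case: hj => hj; rewrite hj => e2.
- have ff1 : ff 2 1 = 2 by rewrite /ff big_ord_recr big_ord0 /= mul1r subr0.
  move: e2; rewrite ff1 -exprS => /eqP; rewrite (_ : (2 : int) - 1 = 1) // mulr1 => /eqP /exp2_inj e2.
  have sz : size b = n by lia.
  have /cards1P [q eqq] : #|~: Z| == 1%N by rewrite cC; apply/eqP; lia.
  have cq i : c i = if i == q then 1 else 0.
    have := congr1 (fun A : {set 'I_(size b)} => i \in A) eqq; rewrite !inE /=.
    by case: (h01 i) => ->; case: (i == q).
  exists (val q); first by rewrite -sz ltn_ord.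
  rewrite /w; case: eqP => [q0|qn0].
    have := cq q; rewrite eqxx /c q0 hj.
    have := hpos 0%N; rewrite -q0 ltn_ord => /(_ isT); lia.
  apply: (@eq_from_nth _ 0%N); first by rewrite size_u.
  move=> i ib; rewrite nth_u -?sz //.
  have := cq (Ordinal ib); rewrite /c /= hj.
  have -> : (Ordinal ib == q) = (i == q :> nat) by [].
  by case: eqP => _; lia.
- have ff2 : ff 2 2 = 2 by rewrite /ff !big_ord_recr big_ord0 /=.
  move: e2; rewrite ff2 -exprS => /eqP; rewrite (_ : (2 : int) - 1 = 1) // mulr1 => /eqP /exp2_inj e2.
  have sz : size b = n.-1 by lia.
  have /eqP : #|~: Z| = 0%N by rewrite cC; lia.
  rewrite cards_eq0 => /eqP Z0.
  have cz i : c i = 0.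
    by have := congr1 (fun A : {set 'I_(size b)} => i \in A) Z0; rewrite !inE => /negbFE /eqP.
  exists 0%N => //; rewrite /w /=.
  apply: (@eq_from_nth _ 0%N); first by rewrite size_iota.
  move=> i ib; rewrite nth_iota -?sz //.
  by have := cz (Ordinal ib); rewrite /c /= hj; lia.
Qed.

End S5.


Theorem theorem11 (n : nat) : 0 < n ->
  exists vs : seq (seq nat),
    [/\ uniq vs, size vs = n, all normalized vs,
        (forall b, normalized b -> (b \in vs <-> rook_equiv b (staircase_board n))) &
        (forall b1 b2, b1 \in vs -> b2 \in vs -> b1 != b2 -> rook_adj b1 b2)].
Proof.
move=> n0; exists [seq w n q | q <- iota 0 n]; split.
- rewrite map_inj_in_uniq ?iota_uniq // => q1 q2; rewrite !mem_iota /= !add0n.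
  exact: w_inj.
- by rewrite size_map size_iota.
- by apply/allP => b /mapP [q]; rewrite mem_iota => /andP [_ qn] ->; apply: normalized_w.
- move=> b nb; split.
    by move=> /mapP [q]; rewrite mem_iota => /andP [_ qn] ->; apply: backward.
  move=> req; have [q qn ->] := forward n0 nb req.
  by apply: map_f; rewrite mem_iota.
- move=> b1 b2 /mapP [q1]; rewrite mem_iota => /andP [_ q1n] ->.
  move=> /mapP [q2]; rewrite mem_iota => /andP [_ q2n] -> ne.
  have qne : q1 != q2 by apply: contra ne => /eqP ->.
  exists n; split; rewrite ?size_w; try by case: eqP => _; lia.
  exists q2, q1, 1; split; first by split => //; rewrite eq_sym.
  rewrite !nth_pad_w // !eqxx (negbTE qne) eq_sym (negbTE qne) !addn1.
  split => //; split => // l ln l1 l2.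
  by rewrite !nth_pad_w // (negbTE l1) (negbTE l2).
Qed.
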